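(* Let $X$ be a Banach space, $f_1,f_2:X\to\mathbb{R}\cup\{+\infty\}$ convex functions, $\bar x\in\operatorname{dom} f_1\cap\operatorname{dom} f_2$, and suppose $0\in\partial f_1(\bar x)+\partial f_2(\bar x)$. Then the pair $\{f_1,f_2\}$ is uniformly lower semicontinuous on $X$, i.e., $\inf_{x\in X}(f_1+f_2)(x)\le \liminf_{\|x-u\|\to 0}\big(f_1(x)+f_2(u)\big)$.
   Context: $\operatorname{dom} f=\{x: f(x)<+\infty\}$. The (Fenchel) subdifferential of $f$ at $\bar x\in\operatorname{dom} f$ is $\partial f(\bar x)=\{x^*\in X^*: f(x)-f(\bar x)-\langle x^*,x-\bar x\rangle\ge0\ \forall x\in X\}$. Here $\liminf_{\|x-u\|\to0}(f_1(x)+f_2(u)):=\lim_{\delta\downarrow0}\inf\{f_1(x)+f_2(u): x,u\in X,\ \|x-u\|<\delta\}$; this is the uniform infimum $\Lambda_X(\{f_1,f_2\})$ of the pair on $X$, and uniform lower semicontinuity on $X$ means $\inf_X(f_1+f_2)\le\Lambda_X(\{f_1,f_2\})$. *)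

(* Defs.v *)
From HB Require Import structures.
From mathcomp Require Import all_boot all_order all_algebra.
From mathcomp Require Import all_classical all_reals all_analysis.
Set Implicit Arguments. Unset Strict Implicit. Unset Printing Implicit Defensive.
Import Order.TTheory GRing.Theory Num.Theory numFieldNormedType.Exports.
Local Open Scope classical_set_scope.
Local Open Scope ring_scope.

(* f : X -> R ∪ {+oo} : never takes the value -oo *)
Definition proper_valued {R : realType} {X : Type} (f : X -> \bar R) : Prop :=
  forall x, f x != -oo%E.

Definition dom {R : realType} {X : Type} (f : X -> \bar R) : set X :=
  [set x | (f x < +oo)%E].

Definition convex_fun {R : realType} (X : normedModType R) (f : X -> \bar R) : Prop :=
  forall (x y : X) (t : R), 0 < t < 1 ->
    (f (t *: x + (1 - t) *: y)%R <= t%:E * f x + (1 - t)%:E * f y)%E.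

Definition dual_elem {R : realType} (X : normedModType R) (xs : X -> R) : Prop :=
  (forall (a : R) (u v : X), xs (a *: u + v) = a * xs u + xs v) /\ continuous xs.

Definition in_subdiff {R : realType} (X : normedModType R) (f : X -> \bar R)
  (xb : X) (xs : X -> R) : Prop :=
  dual_elem xs /\ forall x : X, (f x - f xb - (xs (x - xb)%R)%:E >= 0)%E.

Definition inf_sum {R : realType} (X : normedModType R) (f1 f2 : X -> \bar R) : \bar R :=
  ereal_inf [set (f1 x + f2 x)%E | x in [set: X]].

Definition inf_delta {R : realType} (X : normedModType R) (f1 f2 : X -> \bar R)
  (delta : R) : \bar R :=
  ereal_inf [set (f1 xu.1 + f2 xu.2)%E | xu in [set xu : X * X | (`|xu.1 - xu.2| < delta)%R]].

Definition unif_inf {R : realType} (X : normedModType R) (f1 f2 : X -> \bar R) : \bar R :=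
  lim (inf_delta f1 f2 delta @[delta --> 0^'+]).

Definition uniformly_lsc {R : realType} (X : normedModType R) (f1 f2 : X -> \bar R) : Prop :=
  (inf_sum f1 f2 <= unif_inf f1 f2)%E.

(* Main.v *)
Require Import Defs.
From HB Require Import structures.
From mathcomp Require Import all_boot all_order all_algebra.
From mathcomp Require Import all_classical all_reals all_analysis.
From mathcomp Require Import lra.
Import Order.TTheory GRing.Theory Num.Theory numFieldNormedType.Exports.
Local Open Scope classical_set_scope.
Local Open Scope ring_scope.

Lemma sub_ge0_aux {R : realType} {a : \bar R} {b c : R} :
  a != -oo%E -> (a - b%:E - c%:E >= 0)%E -> ((b + c)%:E <= a)%E.
Proof.
case: a => [r| |] //=; last by move=> _ _; exact: leey.
move=> _ h. rewrite lee_fin. rewrite -!EFinD lee_fin in h. lra.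
Qed.

Theorem proposition2p4 (R : realType) (X : completeNormedModType R)
  (f1 f2 : X -> \bar R) (xb : X) :
  proper_valued f1 -> proper_valued f2 ->
  convex_fun f1 -> convex_fun f2 ->
  xb \in dom f1 `&` dom f2 ->
  (exists xs1 xs2 : X -> R,
      in_subdiff f1 xb xs1 /\ in_subdiff f2 xb xs2 /\
      (forall x, xs1 x + xs2 x = 0)) ->
  uniformly_lsc f1 f2.
Proof.
move=> p1 p2 _ _ /set_mem hxb [xs1 [xs2 [[[lin1 cont1] s1] [[[_ _] s2] hs]]]].
case: hxb => d1 d2; rewrite /dom /= in d1 d2.
have e1 : f1 xb = (fine (f1 xb))%:E.
  by rewrite fineK // fin_numE p1 /= (lt_eqF d1).
have e2 : f2 xb = (fine (f2 xb))%:E.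
  by rewrite fineK // fin_numE p2 /= (lt_eqF d2).
set c1 := fine (f1 xb) in e1 *; set c2 := fine (f2 xb) in e2 *.
set c := c1 + c2.
have x0 : xs1 0 = 0.
  have := lin1 1 0 0; rewrite scaler0 addr0 mul1r => h; lra.
have key : forall x u, ((c + xs1 (x - u))%:E <= f1 x + f2 u)%E.
  move=> x u.
  have h1 := s1 x; rewrite e1 in h1; have {}h1 := sub_ge0_aux (p1 x) h1.
  have h2 := s2 u; rewrite e2 in h2; have {}h2 := sub_ge0_aux (p2 u) h2.
  have := leeD h1 h2; apply: le_trans; rewrite lee_fin.
  have := lin1 1 (x - u) (u - xb); rewrite scale1r mul1r addrA subrK => ->.
  have := hs (u - xb); rewrite /c; lra.
have hc : (f1 xb + f2 xb)%E = c%:E by rewrite e1 e2.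
have bound : forall eps : R, 0 < eps ->
   \forall d \near 0^'+, ((c - eps)%:E <= inf_delta f1 f2 d /\ inf_delta f1 f2 d <= c%:E)%E.
  move=> eps eps0.
  have := @cvgr_dist_lt _ _ _ _ _ xs1 (xs1 0) (cont1 0) _ eps0; rewrite x0 => H.
  have [r r0 hr] := (nbhs_norm0P (V:=X)).1 (H _).
  near=> d.
  have d0 : 0 < d by near: d; exact: nbhs_right_gt.
  have dr : d < r by near: d; exact: nbhs_right_lt.
  split.
    apply/ereal_infP => y [[x u] /= hxu <-].
    apply: le_trans (key x u); rewrite lee_fin.
    have : `|x - u| < r by apply: lt_trans dr.
    move/hr => /=; rewrite sub0r normrN ltr_norml => /andP [h _]; lra.
  apply: ge_ereal_inf; exists (f1 xb + f2 xb)%E; last by rewrite hc.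
  by exists (xb, xb) => //=; rewrite subrr normr0.
rewrite /uniformly_lsc /unif_inf.
have -> : lim (inf_delta f1 f2 d @[d --> 0^'+]) = c%:E.
  apply: (cvg_lim (@ereal_hausdorff R)); apply/fine_cvgP; split.
    apply: filterS (bound 1 ltr01) => d [h1 h2].
    rewrite fin_numElt; apply/andP; split.
      exact: (lt_le_trans (ltNyr _) h1).
    exact: (le_lt_trans h2 (ltry _)).
  apply/cvgrPdist_le => eps eps0.
  apply: filterS (bound eps eps0) => d [h1 h2] /=.
  have hf : inf_delta f1 f2 d = (fine (inf_delta f1 f2 d))%:E.
    rewrite fineK // fin_numElt; apply/andP; split.
      exact: (lt_le_trans (ltNyr _) h1).
    exact: (le_lt_trans h2 (ltry _)).
  rewrite hf !lee_fin in h1 h2.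
  rewrite ler_norml; apply/andP; split; lra.
apply: ge_ereal_inf; exists (f1 xb + f2 xb)%E; last by rewrite hc.
by exists xb.
Unshelve. all: by end_near.
Qed.
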